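(* Let $d\ge 1$ and let $\mu$ be a probability distribution on $Q_d$ such that for all $i\in[d]$ \[ w_i^0\geq \begin{cases}\frac34-\frac1{4d} & \text{if $d$ is odd},\\[2pt] \frac34-\frac1{4(d-1)} & \text{if $d$ is even}.\end{cases} \] Then $(\mathbf 0,\mathbf 0)$ is an equilibrium.
   Context: $Q_d=\{0,1\}^d$ with the Hamming distance $d(X,Y)=|\{i: x_i\neq y_i\}|$. A probability distribution on $Q_d$ is a function $\mu:Q_d\to\mathbb R_{\ge0}$ with $\sum_{V\in Q_d}\mu(V)=1$, extended to subsets by $\mu(\mathcal A)=\sum_{V\in\mathcal A}\mu(V)$. For $A,B\in Q_d$ let $V(A,B)=\{X\in Q_d: d(X,A)<d(X,B)\}$ and $T(A,B)=\{X\in Q_d: d(X,A)=d(X,B)\}$. The payoffs in position $(A,B)$ (Player 1 at $A$, Player 2 at $B$) are $P_1(A,B)=\mu(V(A,B))+\frac12\mu(T(A,B))$ and $P_2(A,B)=\mu(V(B,A))+\frac12\mu(T(A,B))$. The pair $(A,B)$ is an equilibrium if $P_1(A,B)\ge P_1(A',B)$ for all $A'\in Q_d$ and $P_2(A,B)\ge P_2(A,B')$ for all $B'\in Q_d$. For $i\in[d]$, $w_i^0=\mu(\{X\in Q_d: x_i=0\})$. $\mathbf 0=(0,\dots,0)$. *)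

(* Defs.v *)
From mathcomp Require Import all_boot all_order all_algebra.
Set Implicit Arguments. Unset Strict Implicit. Unset Printing Implicit Defensive.
Import Order.TTheory GRing.Theory Num.Theory.
Local Open Scope ring_scope.

Definition cube (d : nat) := {ffun 'I_d -> bool}.

Definition hdist (d : nat) (X Y : cube d) : nat := #|[set i | X i != Y i]|.

Section Game.
Variables (R : realFieldType) (d : nat).

Definition is_distr (mu : cube d -> R) : Prop :=
  (forall V, 0 <= mu V) /\ \sum_(V : cube d) mu V = 1.

Definition measure (mu : cube d -> R) (A : {set cube d}) : R := \sum_(V in A) mu V.

Definition Vor (A B : cube d) : {set cube d} := [set X : cube d | hdist X A < hdist X B]%N.
Definition Tie (A B : cube d) : {set cube d} := [set X : cube d | hdist X A == hdist X B].

Definition P1 (mu : cube d -> R) (A B : cube d) : R :=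
  measure mu (Vor A B) + measure mu (Tie A B) / 2%:R.
Definition P2 (mu : cube d -> R) (A B : cube d) : R :=
  measure mu (Vor B A) + measure mu (Tie A B) / 2%:R.

Definition equilibrium (mu : cube d -> R) (A B : cube d) : Prop :=
  (forall A', P1 mu A' B <= P1 mu A B) /\ (forall B', P2 mu A B' <= P2 mu A B).

(* w_i^0 = mu({X : x_i = 0}) ; coordinate value 0 is represented by false *)
Definition w0 (mu : cube d -> R) (i : 'I_d) : R := measure mu [set X : cube d | X i == false].

Definition zero_pt : cube d := [ffun => false].
End Game.

(* Main.v *)
Require Import Defs.
From mathcomp Require Import all_boot all_order all_algebra.
From mathcomp Require Import zify ring lra.
Import Order.TTheory GRing.Theory Num.Theory.
Local Open Scope ring_scope.

Lemma card_sum (d : nat) (P : pred 'I_d) : #|[set i | P i]| = (\sum_i (P i : nat))%N.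
Proof. by rewrite -sum1_card big_mkcond /=; apply: eq_bigr => i _; rewrite inE; case: (P i). Qed.

Lemma hd_id {d} (X A : cube d) :
  (hdist X (zero_pt d) + \sum_i (A i : nat) = hdist X A + 2 * \sum_i ((X i && A i) : nat))%N.
Proof.
rewrite /hdist !card_sum big_distrr /= -!big_split /=; apply: eq_bigr => i _.
by rewrite /zero_pt ffunE; case: (X i); case: (A i).
Qed.

Definition gn d (A X : cube d) : nat :=
  if (hdist X A < hdist X (zero_pt d))%N then 2 else if hdist X A == hdist X (zero_pt d) then 1 else 0.

Arguments gn {d}.

Lemma P1E (R : realFieldType) d (mu : cube d -> R) (A : cube d) :
  P1 mu A (zero_pt d) = (\sum_X mu X * (gn A X)%:R) / 2%:R.
Proof.
rewrite /P1 /measure big_mkcond [X in _ + X / _]big_mkcond /= !mulr_suml -big_split.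
apply: eq_bigr => X _; rewrite /Vor /Tie /gn !inE.
case: ltngtP => h /=; rewrite ?mulr0 ?mul0r ?add0r ?addr0 //.
- by rewrite mulfK // pnatr_eq0.
- by rewrite mulr1.
Qed.

Lemma pointwise d (A X : cube d) :
  (1 <= \sum_i (A i : nat))%N ->
  (gn A X * (if odd (\sum_i (A i : nat)) then (\sum_i (A i : nat)).+1 else (\sum_i (A i : nat)).+2)
     <= 4 * \sum_i ((X i && A i) : nat))%N.
Proof.
have := hd_id X A.
set k := (\sum_i (A i : nat))%N; set N := (\sum_i _)%N.
rewrite /gn; move: (hdist X _) (hdist X A) => a b.
have hk := odd_double_half k.
move: hk; case: (odd k) => /= hk; rewrite -addnn in hk;
move=> E k1; case: (ltngtP b a) => h; lia.
Qed.

Lemma sumN (R : realFieldType) d (mu : cube d -> R) (A : cube d) :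
  is_distr mu ->
  \sum_X mu X * (\sum_i ((X i && A i) : nat))%:R = \sum_i (A i : nat)%:R * (1 - w0 mu i).
Proof.
move=> [_ H1].
under eq_bigr do rewrite natr_sum mulr_sumr.
rewrite exchange_big /=; apply: eq_bigr => i _.
case: (A i) => /=.
- rewrite mul1r /w0 /measure -[in RHS]H1 [X in _ - X]big_mkcond /= -sumrB; apply: eq_bigr => X _.
  by rewrite inE andbT; case: (X i) => /=; rewrite ?mulr1 ?mulr0 ?subr0 ?subrr.
- by rewrite mul0r; apply: big1 => X _; rewrite andbF mulr0.
Qed.

Lemma pointwise0 d (A X : cube d) :
  (\sum_i (A i : nat))%N = 0%N -> (gn A X <= 1)%N.
Proof.
move=> k0; have := hd_id X A.
have : (\sum_i ((X i && A i) : nat) <= \sum_i (A i : nat))%N.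
  by apply: leq_sum => i _; case: (X i); case: (A i).
rewrite k0 /gn; move: (hdist X _) (hdist X A) (\sum_i _)%N => a b N.
move=> hN E; case: (ltngtP b a) => h; lia.
Qed.

Lemma natfact d k : (1 <= d)%N -> (k <= d)%N ->
  (k * (if odd d then d else d.-1).+1 <= (if odd k then k.+1 else k.+2) * (if odd d then d else d.-1))%N.
Proof.
move=> d1 kd.
have hk := odd_double_half k; have hd := odd_double_half d.
move: hk hd; case: (odd k); case: (odd d) => /= hk hd; rewrite -addnn in hk hd; nia.
Qed.

Lemma ksum d (A : cube d) : (\sum_i (A i : nat) <= d)%N.
Proof.
apply: leq_trans (_ : \sum_(i < d) 1 <= d)%N.
  by apply: leq_sum => i _; case: (A i).
by rewrite sum1_card card_ord.
Qed.

Lemma key (R : realFieldType) d (mu : cube d -> R) (A : cube d) :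
  (1 <= d)%N -> is_distr mu ->
  (forall i, 3%:R / 4%:R - 1 / (4 * (if odd d then d else d.-1))%:R <= w0 mu i) ->
  P1 mu A (zero_pt d) <= 1 / 2%:R.
Proof.
move=> d1 Hmu Hw.
have [Hpos H1] := Hmu.
rewrite P1E ler_pM2r ?invr_gt0 ?ltr0n //.
set k := (\sum_i (A i : nat))%N.
have [k0|kpos] := posnP k.
  rewrite -[leRHS]H1; apply: ler_sum => X _.
  by rewrite -[leRHS]mulr1 ler_wpM2l // (_ : 1 = 1%:R) // ler_nat; exact: pointwise0.
set D := if odd d then d else d.-1.
have Dpos : (0 < D)%N by rewrite /D; case: (odd d) (odd_double_half d); lia.
set m := if odd k then k.+1 else k.+2.
have mpos : (0 : R) < m%:R by rewrite ltr0n /m; case: (odd k).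
rewrite -(ler_pM2r mpos) mul1r mulr_suml.
apply: le_trans (_ : \sum_X mu X * (4 * \sum_i ((X i && A i) : nat))%:R <= _).
  apply: ler_sum => X _; rewrite -mulrA -natrM ler_wpM2l // ler_nat.
  exact: pointwise.
under eq_bigr do rewrite natrM mulrCA.
rewrite -mulr_sumr sumN //.
have c1 : forall i, 1 - w0 mu i <= 1 / 4%:R + 1 / (4 * D)%:R.
  move=> i; have := Hw i; rewrite -/D => h.
  lra.
apply: le_trans (_ : 4%:R * \sum_i (A i : nat)%:R * (1 / 4%:R + 1 / (4 * D)%:R) <= _).
  rewrite ler_wpM2l ?ler0n //; apply: ler_sum => i _; rewrite ler_wpM2l ?ler0n //.
rewrite -mulr_suml -natr_sum -/k.
have nf := natfact d k d1 (ksum d A); rewrite -/D -/m in nf.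
have -> : (4%:R * (k%:R * (1 / 4%:R + 1 / (4 * D)%:R)) : R) = (k * D.+1)%:R / D%:R.
  rewrite natrM -addn1 natrD natrM; field.
  by rewrite pnatr_eq0 -lt0n.
rewrite ler_pdivrMr ?ltr0n // -natrM ler_nat //.
Qed.

Lemma P2P1 (R : realFieldType) d (mu : cube d -> R) (A B : cube d) :
  P2 mu A B = P1 mu B A.
Proof.
rewrite /P2 /P1; congr (_ + measure _ _ / _); apply/setP => X; by rewrite !inE eq_sym.
Qed.

Lemma P100 (R : realFieldType) d (mu : cube d -> R) :
  is_distr mu -> P1 mu (zero_pt d) (zero_pt d) = 1 / 2%:R.
Proof.
move=> [_ H1]; rewrite P1E /gn; congr (_ / _); rewrite -[RHS]H1.
by apply: eq_bigr => X _; rewrite ltnn eqxx mulr1.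
Qed.

Theorem mainTheorem2 (R : realFieldType) (d : nat) (mu : cube d -> R) :
  (1 <= d)%N ->
  is_distr mu ->
  (forall i : 'I_d,
     w0 mu i >= (if odd d then 3%:R / 4%:R - 1 / (4 * d)%:R
                 else 3%:R / 4%:R - 1 / (4 * d.-1)%:R)) ->
  equilibrium mu (zero_pt d) (zero_pt d).
Proof.
move=> d1 Hmu Hw.
have Hw' : forall i, 3%:R / 4%:R - 1 / (4 * (if odd d then d else d.-1))%:R <= w0 mu i.
  by move=> i; have := Hw i; case: (odd d).
split.
- by move=> A'; rewrite P100 //; apply: key.
- by move=> B'; rewrite !P2P1 P100 //; apply: key.
Qed.
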